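(* There is an absolute constant $C$ such that the following holds. Let $n\in\mathbb N$, $c>0$, and let $w\in\mathcal W$ satisfy $|w|\le c$ and be measurable with respect to the product $\sigma$-algebra $\mathcal A_n^*\times\mathcal A_n^*$, where $\mathcal A_n^*$ is the (finite) algebra of subsets of $[0,1]$ generated by the intervals $I_i=[\frac in,\frac{i+1}n]$, $0\le i\le n-1$ (so $w$ is constant on each $I_i\times I_j$ up to boundaries). Then $$\Big|\sup_{A\in\mathcal A}\Gamma(w,A)-\max_{A\in\mathcal A_n^*}\Gamma(w,A)\Big|\le \frac{Cc}{n}.$$
   Context: $\mathcal W$ is the space of bounded symmetric measurable functions $[0,1]^2\to\mathbb R$; $\mathcal A$ is the collection of Lebesgue measurable subsets of $[0,1]$. With $[x]_+=\max(x,0)$, for $w\in\mathcal W$ and $A\in\mathcal A$, $$\Gamma(w,A)=\iint_{y<z}\Big[\int_{A\cap[0,y]}(w(x,z)-w(x,y))\,dx\Big]_+dy\,dz+\iint_{y<z}\Big[\int_{A\cap[z,1]}(w(x,y)-w(x,z))\,dx\Big]_+dy\,dz,$$ and $\Gamma(w)=\sup_{A\in\mathcal A}\Gamma(w,A)$. *)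

(* Defs.v *)
From mathcomp Require Import all_boot all_order all_algebra.
From mathcomp Require Import all_classical all_reals all_analysis.
Set Implicit Arguments. Unset Strict Implicit. Unset Printing Implicit Defensive.
Import Order.TTheory GRing.Theory Num.Theory.
Import numFieldNormedType.Exports.
Local Open Scope classical_set_scope.
Local Open Scope ring_scope.

Section Defs.
Context {R : realType}.

Definition leb : set _ -> \bar R := @completed_lebesgue_measure R.

(* The class \mathcal A: Lebesgue measurable subsets of [0,1]. *)
Definition Lmeas (A : set R) : Prop :=
  ((wlength (R:=R) idfun)^*%mu).-cara.-measurable A /\ A `<=` `[0, 1]%classic.

Definition pos (x : R) : R := Num.max x 0.

Definition Gamma (w : R -> R -> R) (A : set R) : R :=
  \int[leb]_(z in `[0, 1]%classic)
     \int[leb]_(y in `[0, 1]%classic `&` [set y | y < z])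
        pos (\int[leb]_(x in A `&` `[0, y]%classic) (w x z - w x y))
  + \int[leb]_(z in `[0, 1]%classic)
     \int[leb]_(y in `[0, 1]%classic `&` [set y | y < z])
        pos (\int[leb]_(x in A `&` `[z, 1]%classic) (w x y - w x z)).

Definition Gamma_sup (w : R -> R -> R) : R := sup [set Gamma w A | A in Lmeas].

(* Atoms of the finite algebra A_n^* generated by I_i = [i/n,(i+1)/n],
   0 <= i <= n-1: for k = 2i (0 <= i <= n) the point {i/n}, and for
   k = 2i+1 (0 <= i <= n-1) the open interval ]i/n,(i+1)/n[. *)
Definition atom (n k : nat) : set R :=
  if odd k then `]((k./2)%:R / n%:R), ((k./2).+1%:R / n%:R)[%classic
  else [set (k./2)%:R / n%:R].

(* A_n^*: the finite unions of atoms (= the algebra generated by the I_i). *)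
Definition An_star (n : nat) (A : set R) : Prop :=
  exists S : set nat,
    A = \bigcup_(k in [set k | (k < (2 * n).+1)%N /\ S k]) atom n k.

(* w (restricted to [0,1]^2) is measurable w.r.t. A_n^* x A_n^*,
   i.e. constant on every product of two atoms. *)
Definition An_star_measurable (n : nat) (w : R -> R -> R) : Prop :=
  forall k l : nat, (k < (2 * n).+1)%N -> (l < (2 * n).+1)%N ->
    exists a : R, forall x y, atom n k x -> atom n l y -> w x y = a.

(* max_{A in A_n^*} Gamma(w,A) (a maximum over a finite family, written as sup) *)
Definition Gamma_max_n (n : nat) (w : R -> R -> R) : R :=
  sup [set Gamma w A | A in An_star n].

End Defs.

(* Main.v *)
Require Import Defs.
From mathcomp Require Import all_boot all_order all_algebra.
From mathcomp Require Import all_classical all_reals all_analysis.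
From mathcomp Require Import ring lra.
Import Order.TTheory GRing.Theory Num.Theory.
Local Open Scope classical_set_scope.
Local Open Scope ring_scope.

Module Helpers.
Set Implicit Arguments. Unset Strict Implicit. Unset Printing Implicit Defensive.
Import numFieldNormedType.Exports.

Section S.
Context {R : realType}.

Lemma atomP (n k : nat) (x : R) : (0 < n)%N ->
  atom n k x <-> (if odd k then k%:R - 1 < x * (2 * n%:R) < k%:R + 1
                  else x * (2 * n%:R) == k%:R).
Proof.
move=> n0; have n0' : (0 : R) < n%:R by rewrite ltr0n.
have hk : (k%:R : R) = 2 * (k./2)%:R + (odd k)%:R.
  by rewrite -{1}(odd_double_half k) natrD -muln2 natrM mulrC addrC.
rewrite /atom; case: (odd k) hk => /= hk.
- rewrite /= in_itv /= ltr_pdivrMr // ltr_pdivlMr // hk.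
  split => /andP[h1 h2]; apply/andP; split; rewrite ?natrS in h1 h2 *; lra.
- rewrite /= hk; split.
  + move=> ->; apply/eqP; rewrite addr0; field; lra.
  + move=> /eqP h; rewrite addr0 in h.
    have -> : x = (x * (2 * n%:R)) / (2 * n%:R) by field; lra.
    rewrite h; rewrite /=; field; lra.
Qed.


Lemma atom_lt (n k k' : nat) (x x' : R) : (0 < n)%N -> (k < k')%N ->
  atom n k x -> atom n k' x' -> x < x'.
Proof.
move=> n0 kk' /(atomP _ _ n0) h /(atomP _ _ n0) h'.
have n0' : (0 : R) < n%:R by rewrite ltr0n.
suff : x * (2 * n%:R) < x' * (2 * n%:R) by rewrite ltr_pM2r ?mulr_gt0.
have k1 : (k.+1%:R : R) <= k'%:R by rewrite ler_nat.
rewrite -natr1 in k1.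
move: h h'; case ok: (odd k); case ok': (odd k').
- have k2 : (k.+2%:R : R) <= k'%:R.
    rewrite ler_nat; rewrite ltn_neqAle kk' andbT.
    by apply/negP => /eqP e; move: ok'; rewrite -e /= ok.
  rewrite -!natr1 in k2.
  move=> /andP[h1 h2] /andP[h3 h4]; lra.
- move=> /andP[h1 h2] /eqP h3; lra.
- move=> /eqP h1 /andP[h3 h4]; lra.
- move=> /eqP h1 /eqP h3; lra.
Qed.

Lemma atom_disj (n k k' : nat) (x : R) : (0 < n)%N -> k <> k' ->
  atom n k x -> atom n k' x -> False.
Proof.
move=> n0 kk h h'; case: (ltngtP k k') => e.
- by have := atom_lt n0 e h h'; rewrite ltxx.
- by have := atom_lt n0 e h' h; rewrite ltxx.
- exact: kk e.
Qed.

Lemma atom_01 (n k : nat) (x : R) : (0 < n)%N -> (k < (2 * n).+1)%N ->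
  atom n k x -> 0 <= x <= 1.
Proof.
move=> n0 kN /(atomP _ _ n0) h.
have n0' : (0 : R) < n%:R by rewrite ltr0n.
have k2 : (k%:R : R) <= 2 * n%:R by rewrite -natrM ler_nat -ltnS.
suff : 0 <= x * (2 * n%:R) <= 1 * (2 * n%:R).
  move=> /andP[a b]; apply/andP; split; nra.
move: h; case ok: (odd k).
- have k3 : (k.+1%:R : R) <= 2 * n%:R.
    rewrite -natrM ler_nat ltn_neqAle -ltnS kN andbT.
    by apply/negP => /eqP e; move: ok; rewrite e oddM.
  rewrite -natr1 in k3.
  have k1 : (1 : R) <= k%:R by rewrite ler1n; case: k ok {kN k2 k3}.
  move=> /andP[h1 h2]; apply/andP; split; lra.
- have k0 : (0:R) <= k%:R by rewrite ler0n.
  move=> /eqP h1; apply/andP; split; lra.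
Qed.

Definition pt (n k : nat) : R := k%:R / (2 * n%:R).

Lemma atom_pt (n k : nat) : (0 < n)%N -> atom n k (pt n k).
Proof.
move=> n0; have n0' : (0 : R) < n%:R by rewrite ltr0n.
have e : pt n k * (2 * n%:R) = k%:R by rewrite /pt; field; lra.
apply/(atomP _ _ n0); rewrite e.
by case: (odd k); [apply/andP; split; lra | exact: eqxx].
Qed.


Lemma atom_cover (n : nat) (x : R) : (0 < n)%N -> 0 <= x <= 1 ->
  exists2 k, (k < (2 * n).+1)%N & atom n k x.
Proof.
move=> n0 /andP[x0 x1].
have n0' : (0 : R) < n%:R by rewrite ltr0n.
set t := x * (2 * n%:R).
have t0 : 0 <= t by rewrite /t mulr_ge0 // mulr_ge0 // ler0n.
have t2 : t <= 2 * n%:R by rewrite /t; nra.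
set j := Num.trunc t.
have jl : (j%:R : R) <= t by rewrite truncn_le.
have ju : t < j.+1%:R by exact: truncnS_gt.
rewrite -natr1 in ju.
have j2 : (j <= 2 * n)%N.
  rewrite /j truncn_le_nat -natr1 (natrM R 2 n); lra.
have j2' : (j%:R : R) <= 2 * n%:R by rewrite -natrM ler_nat.
case oj: (odd j).
  exists j; first by rewrite ltnS.
  by apply/(atomP _ _ n0); rewrite oj -/t; apply/andP; split; lra.
case tj: (t == j%:R).
  exists j; first by rewrite ltnS.
  by apply/(atomP _ _ n0); rewrite oj -/t.
have tj' : j%:R < t by rewrite lt_neqAle jl andbT eq_sym tj.
exists j.+1.
  rewrite ltnS ltn_neqAle j2 andbT; apply/negP => /eqP e.
  by move: tj'; rewrite e natrM; lra.
apply/(atomP _ _ n0); rewrite /= oj /= -/t -natr1; apply/andP; split; lra.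
Qed.


Local Notation LT := (ltac:(let t := type of (@leb R) in match t with set ?T -> _ => exact T end)) (only parsing).

Lemma lebE (X : set R) : leb X = lebesgue_measure X.
Proof. reflexivity. Qed.

Lemma measL (X : set R) : measurable X -> measurable (X : set LT).
Proof. move=> mX. exact: sub_caratheodory. Qed.

Lemma Lmeas_meas (A : set R) : Lmeas A -> measurable (A : set LT).
Proof. by case. Qed.

Lemma atom_meas (n k : nat) : measurable (atom n k : set LT).
Proof.
apply: measL; rewrite /atom; case: (odd k).
- exact: measurable_itv.
- exact: measurable_set1.
Qed.

Definition muk (n k : nat) : R := if odd k then n%:R^-1 else 0.

Lemma leb_atom (n k : nat) : (0 < n)%N -> leb (atom n k) = (muk n k)%:E.
Proof.
move=> n0; have n0' : (0 : R) < n%:R by rewrite ltr0n.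
rewrite lebE /atom /muk; case: (odd k).
- rewrite lebesgue_measure_itv /= lte_fin ltr_pM2r ?invr_gt0 // ltr_nat ltnSn.
  by rewrite -EFinB; congr EFin; rewrite -mulrBl -natrB // subSnn mul1r.
- exact: lebesgue_measure_set1.
Qed.

Lemma muk_ge0 n k : 0 <= muk n k.
Proof. by rewrite /muk; case: ifP => // _; rewrite invr_ge0 ler0n. Qed.


Lemma step_int (n : nat) (D : set R) (f : R -> R) (v : nat -> R) :
  (0 < n)%N -> measurable (D : set LT) -> D `<=` `[0, 1] ->
  (forall k x, (k < (2 * n).+1)%N -> atom n k x -> D x -> f x = v k) ->
  (\int[leb]_(x in D) (f x)%:E =
   \sum_(0 <= k < (2 * n).+1) (v k)%:E * leb (atom n k `&` D))%E.
Proof.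
move=> n0 mD D01 fv.
set N := (2 * n).+1.
have cov : forall x, D x -> exists2 k, (k < N)%N & atom n k x.
  move=> x /D01; rewrite /= in_itv /= => x01; exact: atom_cover.
have DE : D = \big[setU/set0]_(i <- index_iota 0 N) (atom n i `&` D).
  rewrite big_mkord. rewrite -(bigcup_mkord N (fun i => atom n i `&` D)); apply/seteqP; split.
  - by move=> x Dx; have [k kN ak] := cov x Dx; exists k => //.
  - by move=> x [k _ []].
have mF : forall i, measurable (atom n i `&` D : set LT).
  by move=> i; apply: measurableI => //; exact: atom_meas.
transitivity (\int[leb]_(x in \big[setU/set0]_(i <- index_iota 0 N)
     (atom n i `&` D)) (f x)%:E)%E; first by rewrite -DE.
rewrite integral_bigsetU_EFin //; last 2 first.
- move=> i j _ _ [x [[ai _] [aj _]]].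
  by case: (eqVneq i j) => // /eqP ij; exfalso; exact: atom_disj n0 ij ai aj.
- rewrite -DE; move=> _ B mB.
  have -> : D `&` (EFin \o f) @^-1` B =
      \bigcup_(k in [set k | (k < N)%N /\ B (v k)%:E]) (atom n k `&` D).
    apply/seteqP; split.
    - move=> x [Dx Bx]; have [k kN ak] := cov x Dx.
      by exists k => //; split => //; rewrite -(fv k x).
    - by move=> x [k [kN Bk] [ak Dx]]; split => //=; rewrite (fv k x).
  by apply: bigcup_measurable => k _; exact: mF.
apply: eq_big_nat => k /andP[_ kN].
transitivity (\int[leb]_(x in atom n k `&` D) (cst (v k)%:E) x)%E.
  by apply: eq_integral => x; rewrite inE => -[ak Dx] /=; rewrite (fv k x).
by rewrite integral_cst.
by rewrite /index_iota iota_uniq.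
Qed.


Definition idx (n : nat) (x : R) : nat :=
  xget 0%N [set k | (k < (2 * n).+1)%N /\ atom n k x].

Lemma idxE n k x : (0 < n)%N -> (k < (2 * n).+1)%N -> atom n k x -> idx n x = k.
Proof.
move=> n0 kN ak; rewrite /idx; case: xgetP => [j _ [jN aj] | H].
- by case: (eqVneq j k) => // /eqP jk; exfalso; exact: atom_disj n0 jk aj ak.
- by exfalso; exact: (H k).
Qed.

Lemma int_mono (D : set LT) (f g : R -> \bar R) :
  (forall x, D x -> (0 <= f x)%E) -> (forall x, D x -> (f x <= g x)%E) ->
  (\int[leb]_(x in D) f x <= \int[leb]_(x in D) g x)%E.
Proof.
move=> f0 fg.
have g0 : forall x, D x -> (0 <= g x)%E by move=> x Dx; exact: le_trans (f0 x Dx) (fg x Dx).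
rewrite (ge0_integralE _ f0) (ge0_integralE _ g0).
apply: ereal_sup_le => _ [h hf <-]; exists h => //= x.
apply: le_trans (hf x) _; rewrite /patch; case: ifP => // /set_mem Dx; exact: fg.
Qed.

Definition mI (n : nat) (D : set R) (k : nat) : R := fine (leb (atom n k `&` D)).

Lemma mI_fin n D k : (0 < n)%N -> measurable (D : set LT) ->
  leb (atom n k `&` D) = (mI n D k)%:E /\ 0 <= mI n D k <= muk n k.
Proof.
move=> n0 mD.
have h1 : (leb (atom n k `&` D) <= (muk n k)%:E)%E.
  rewrite -leb_atom //; apply: measureIl => //; exact: atom_meas.
have h0 : (0 <= leb (atom n k `&` D))%E by apply: measure_ge0.
have fin : leb (atom n k `&` D) \is a fin_num by rewrite ge0_fin_numE // (le_lt_trans h1) // ltry.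
rewrite /mI fineK //; split => //; apply/andP; split.
- by rewrite fine_ge0.
- by rewrite -lee_fin fineK.
Qed.

Lemma Rint_step n (D : set R) (f : R -> R) (v : nat -> R) :
  (0 < n)%N -> measurable (D : set LT) -> D `<=` `[0, 1] ->
  (forall k x, (k < (2 * n).+1)%N -> atom n k x -> D x -> f x = v k) ->
  (\int[leb]_(x in D) (f x)%:E =
   (\sum_(0 <= k < (2 * n).+1) v k * mI n D k)%:E)%E.
Proof.
move=> n0 mD D01 fv; rewrite (step_int n0 mD D01 fv) -sumEFin.
by apply: eq_bigr => k _; rewrite (mI_fin k n0 mD).1.
Qed.

Lemma sandwich n (D : set R) (f : R -> R) (lo hi : nat -> R) :
  (0 < n)%N -> measurable (D : set LT) -> D `<=` `[0, 1] ->
  (forall k, 0 <= lo k) ->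
  (forall k x, (k < (2 * n).+1)%N -> atom n k x -> D x -> lo k <= f x <= hi k) ->
  \sum_(0 <= k < (2 * n).+1) lo k * mI n D k <= \int[leb]_(x in D) f x <=
  \sum_(0 <= k < (2 * n).+1) hi k * mI n D k.
Proof.
move=> n0 mD D01 lo0 fb.
have inat : forall x, D x -> (idx n x < (2 * n).+1)%N /\ atom n (idx n x) x.
  move=> x Dx; have := D01 x Dx; rewrite /= in_itv /= => x01.
  have [k kN ak] := atom_cover n0 x01.
  by rewrite (idxE n0 kN ak).
have f0 : forall x, D x -> 0 <= f x.
  move=> x Dx; have [kN ak] := inat x Dx.
  by have /andP[h _] := fb _ _ kN ak Dx; exact: le_trans (lo0 _) h.
have eU := @Rint_step n D (fun x => hi (idx n x)) hi n0 mD D01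
  (fun k x kN ak _ => congr1 hi (idxE n0 kN ak)).
have eL := @Rint_step n D (fun x => lo (idx n x)) lo n0 mD D01
  (fun k x kN ak _ => congr1 lo (idxE n0 kN ak)).
have fin_int : forall g : R -> R, (forall x, D x -> 0 <= f x <= g x) ->
    (\int[leb]_(x in D) (g x)%:E)%E \is a fin_num ->
    (\int[leb]_(x in D) (f x)%:E)%E \is a fin_num /\
    (\int[leb]_(x in D) f x <= \int[leb]_(x in D) g x).
  move=> g fg gfin.
  have le1 : (\int[leb]_(x in D) (f x)%:E <= \int[leb]_(x in D) (g x)%:E)%E.
    apply: int_mono => x Dx; have /andP[a b] := fg x Dx; by rewrite lee_fin.
  have ge0 : (0 <= \int[leb]_(x in D) (f x)%:E)%E.
    by apply: integral_ge0 => x Dx; rewrite lee_fin; exact: f0.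
  have ffin : (\int[leb]_(x in D) (f x)%:E)%E \is a fin_num.
    rewrite ge0_fin_numE //; apply: le_lt_trans le1 _.
    by rewrite ltey; move: gfin; rewrite fin_numE => /andP[].
  by split => //; apply: fine_le.
have U0 : forall x, D x -> 0 <= f x <= hi (idx n x).
  move=> x Dx; have [kN ak] := inat x Dx; have /andP[_ b] := fb _ _ kN ak Dx.
  by apply/andP; split; [exact: f0 | exact: b].
have L0 : forall x, D x -> 0 <= lo (idx n x) <= f x.
  move=> x Dx; have [kN ak] := inat x Dx; have /andP[a _] := fb _ _ kN ak Dx.
  by apply/andP; split; [exact: lo0 | exact: a].
have [ffin leU] := fin_int (fun x => hi (idx n x)) U0 ltac:(by rewrite eU).
have leL : (\int[leb]_(x in D) (lo (idx n x))%:E <= \int[leb]_(x in D) (f x)%:E)%E.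
  by apply: int_mono => x Dx; have /andP[a b] := L0 x Dx; rewrite lee_fin.
apply/andP; split.
- have : fine (\int[leb]_(x in D) (lo (idx n x))%:E)%E <=
         fine (\int[leb]_(x in D) (f x)%:E)%E.
    by apply: fine_le => //; rewrite eL.
  by rewrite eL.
- by move: leU; rewrite /Rintegral eU.
Qed.


Lemma sum_muk_gen n m : \sum_(0 <= k < (2 * m).+1) muk n k = m%:R / n%:R.
Proof.
elim: m => [|m IH]; first by rewrite big_nat1 /muk /= mul0r.
have -> : (2 * m.+1).+1 = ((2 * m).+1).+1.+1 by rewrite mulnS.
rewrite big_nat_recr //= big_nat_recr //= IH /muk /=.
have -> : odd (2 * m) = false by rewrite oddM.
rewrite /= -natr1 mulrDl mul1r; rewrite addr0.
done.
Qed.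

Lemma sum_muk n : (0 < n)%N -> \sum_(0 <= k < (2 * n).+1) muk n k = 1.
Proof. by move=> n0; rewrite sum_muk_gen divff // pnatr_eq0 -lt0n. Qed.

Lemma mI_atom n (D : set R) k : (0 < n)%N -> measurable (D : set LT) ->
  atom n k `<=` D -> mI n D k = muk n k.
Proof.
move=> n0 mD sub; rewrite /mI.
have -> : atom n k `&` D = atom n k by apply/setIidPl.
by rewrite leb_atom.
Qed.

Lemma mI_even n (D : set R) k : (0 < n)%N -> measurable (D : set LT) ->
  ~~ odd k -> mI n D k = 0.
Proof.
move=> n0 mD ok; have [_ /andP[a b]] := mI_fin k n0 mD.
by apply/eqP; rewrite eq_le a andbT; move: b; rewrite /muk (negbTE ok).
Qed.

Lemma meas_lt (z : R) : measurable ([set y | y < z] : set LT).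
Proof.
apply: measL; have -> : [set y : R | y < z] = `]-oo, z[%classic.
  by apply/seteqP; split => y; rewrite /= in_itv.
exact: measurable_itv.
Qed.

Lemma meas_01 : measurable (`[0, 1]%classic : set LT).
Proof. apply: measL; exact: measurable_itv. Qed.


Definition Hs n (s : nat -> nat -> R) l :=
  \sum_(0 <= k < (2 * n).+1) (if (k < l)%N then muk n k * s k l else 0).

Definition Fs n (s : nat -> nat -> R) :=
  \sum_(0 <= l < (2 * n).+1) muk n l * Hs n s l.

Section Outer.
Variables (n : nat) (g : R -> R -> R) (s : nat -> nat -> R) (B e : R).
Hypothesis n0 : (0 < n)%N.
Hypothesis e0 : 0 <= e.
Hypothesis B0 : 0 <= B.
Hypothesis s0 : forall k l, 0 <= s k l.
Hypothesis H0 : forall y z, 0 <= y <= 1 -> 0 <= z <= 1 -> y < z -> 0 <= g y z <= B.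
Hypothesis H1 : forall k l y z, (k < (2 * n).+1)%N -> (l < (2 * n).+1)%N ->
  odd k -> odd l -> (k < l)%N -> atom n k y -> atom n l z -> `|g y z - s k l| <= e.
Hypothesis H2 : forall l y z, (l < (2 * n).+1)%N -> odd l ->
  atom n l y -> atom n l z -> g y z = 0.

Let Dz (z : R) := `[0, 1]%classic `&` [set y : R | y < z].

Let mDz z : measurable (Dz z : set LT).
Proof. apply: measurableI; [exact: meas_01 | exact: meas_lt]. Qed.

Let Dz01 z : Dz z `<=` `[0, 1]. Proof. by move=> y []. Qed.

Lemma inner_crude z : 0 <= z <= 1 ->
  0 <= \int[leb]_(y in Dz z) g y z <= B.
Proof.
move=> z01.
have hyp : forall k y, (k < (2 * n).+1)%N -> atom n k y -> Dz z y ->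
    (fun=> 0) k <= g y z <= (fun=> B) k.
  move=> k y kN ay [y01 yz]; apply: H0 => //; by move: y01; rewrite /= in_itv.
have /andP[h1 h2] := @sandwich n (Dz z) (fun y => g y z) (fun=> 0) (fun=> B) n0
  (@mDz z) (@Dz01 z) (fun _ => lexx (0:R)) hyp.
apply/andP; split.
  by apply: le_trans h1; rewrite big1 // => k _; rewrite mul0r.
apply: le_trans h2 _.
rewrite -mulr_sumr -[X in _ <= X]mulr1 ler_wpM2l // -(sum_muk n0).
by apply: ler_sum => k _; have [_ /andP[_ ]] := mI_fin k n0 (@mDz z).
Qed.

Lemma inner_bound l z : (l < (2 * n).+1)%N -> odd l -> atom n l z ->
  Hs n s l - e <= \int[leb]_(y in Dz z) g y z <= Hs n s l + e.
Proof.
move=> lN ol az.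
set lo := fun k => if (k < l)%N && odd k then Num.max (s k l - e) 0 else 0.
set hi := fun k => if (k < l)%N then (if odd k then s k l + e else B) else 0.
have lo0 : forall k, 0 <= lo k.
  by move=> k; rewrite /lo; case: ifP => // _; rewrite le_max lexx orbT.
have hyp : forall k y, (k < (2 * n).+1)%N -> atom n k y -> Dz z y ->
    lo k <= g y z <= hi k.
  move=> k y kN ay [y01 yz]; rewrite /= in_itv /= in y01.
  have z01 := atom_01 n0 lN az.
  have /andP[g0 gB] := H0 y01 z01 yz.
  rewrite /lo /hi; case: (ltngtP k l) => kl /=.
  - case ok: (odd k) => /=; last by rewrite g0.
    have := H1 kN lN ok ol kl ay az; rewrite ler_norml => /andP[a b].
    by rewrite ge_max g0 andbT; apply/andP; split; lra.
  - by have := atom_lt n0 kl az ay; rewrite ltNge (ltW yz).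
  - by move: ay; rewrite kl => ay; rewrite (H2 lN ol ay az) lexx.
have := @sandwich n (Dz z) (fun y => g y z) lo hi n0 (@mDz z) (@Dz01 z) lo0 hyp.
case/andP => hL hU.
have mIk : forall k, (k < l)%N -> mI n (Dz z) k = muk n k.
  move=> k kl; apply: mI_atom => // y ay.
  have kN : (k < (2 * n).+1)%N by apply: ltn_trans kl lN.
  split; first by rewrite /= in_itv /=; exact: atom_01 n0 kN ay.
  exact: atom_lt n0 kl ay az.
have sm := sum_muk n0.
apply/andP; split.
- apply: le_trans hL; rewrite /Hs.
  have -> : e = \sum_(0 <= k < (2 * n).+1) muk n k * e by rewrite -mulr_suml sm mul1r.
  rewrite -sumrB; apply: ler_sum => k _.
  rewrite /lo; case kl: (k < l)%N => /=.
  + rewrite (mIk k kl); case ok: (odd k) => /=.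
    * rewrite -mulrBr mulrC ler_wpM2r ?muk_ge0 //.
      by rewrite le_max lexx.
    * by rewrite /muk ok !mul0r subrr.
  + rewrite mul0r sub0r oppr_le0; exact: mulr_ge0 (muk_ge0 _ _) e0.
- apply: le_trans hU _; rewrite /Hs.
  have -> : e = \sum_(0 <= k < (2 * n).+1) muk n k * e by rewrite -mulr_suml sm mul1r.
  rewrite -big_split; apply: ler_sum => k _.
  rewrite /hi; case kl: (k < l)%N => /=.
  + rewrite (mIk k kl); case ok: (odd k) => /=.
    * by rewrite mulrDl mulrC [e * _]mulrC.
    * by rewrite /muk ok !mul0r !mulr0 addr0.
  + rewrite mul0r add0r; exact: mulr_ge0 (muk_ge0 _ _) e0.
Qed.


Lemma outer_bound :
  Fs n s - e <= \int[leb]_(z in `[0, 1]%classic) \int[leb]_(y in Dz z) g y z <= Fs n s + e.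
Proof.
set lo := fun l => if odd l then Num.max (Hs n s l - e) 0 else 0.
set hi := fun l => if odd l then Hs n s l + e else B.
have lo0 : forall k, 0 <= lo k.
  by move=> k; rewrite /lo; case: ifP => // _; rewrite le_max lexx orbT.
have hyp : forall l z, (l < (2 * n).+1)%N -> atom n l z -> `[0, 1]%classic z ->
    lo l <= \int[leb]_(y in Dz z) g y z <= hi l.
  move=> l z lN az _; have z01 := atom_01 n0 lN az.
  have /andP[c0 cB] := inner_crude z01.
  rewrite /lo /hi; case ol: (odd l); last by rewrite c0.
  have /andP[a b] := inner_bound lN ol az.
  by rewrite ge_max c0 andbT a b.
have := @sandwich n `[0, 1]%classic (fun z => \int[leb]_(y in Dz z) g y z) lo hi n0
  meas_01 (fun _ h => h) lo0 hyp.
case/andP => hL hU.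
have mIk : forall l, (l < (2 * n).+1)%N -> mI n `[0, 1]%classic l = muk n l.
  move=> l lN; apply: mI_atom => //; [exact: meas_01|] => y ay.
  by rewrite /= in_itv /=; exact: atom_01 n0 lN ay.
have sm := sum_muk n0.
apply/andP; split.
- apply: le_trans hL; rewrite /Fs.
  have -> : e = \sum_(0 <= k < (2 * n).+1) muk n k * e by rewrite -mulr_suml sm mul1r.
  rewrite -sumrB; apply: ler_sum_nat => l /andP[_ lN]; rewrite (mIk l lN) /lo; case ol: (odd l).
  + by rewrite -mulrBr mulrC ler_wpM2r ?muk_ge0 // le_max lexx.
  + by rewrite /muk ol !mul0r subrr.
- apply: le_trans hU _; rewrite /Fs.
  have -> : e = \sum_(0 <= k < (2 * n).+1) muk n k * e by rewrite -mulr_suml sm mul1r.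
  rewrite -big_split; apply: ler_sum_nat => l /andP[_ lN]; rewrite (mIk l lN) /hi; case ol: (odd l).
  + by rewrite mulrDl mulrC [e * _]mulrC.
  + by rewrite /muk ol mulr0 !mul0r; apply: addr_ge0.
Qed.

Lemma outer_crude :
  0 <= \int[leb]_(z in `[0, 1]%classic) \int[leb]_(y in Dz z) g y z <= B.
Proof.
have hyp : forall k z, (k < (2 * n).+1)%N -> atom n k z -> `[0, 1]%classic z ->
    (fun=> 0) k <= \int[leb]_(y in Dz z) g y z <= (fun=> B) k.
  by move=> k z kN az _; exact: inner_crude (atom_01 n0 kN az).
have /andP[h1 h2] := @sandwich n `[0, 1]%classic (fun z => \int[leb]_(y in Dz z) g y z)
  (fun=> 0) (fun=> B) n0 meas_01 (fun _ h => h) (fun _ => lexx (0:R)) hyp.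
apply/andP; split.
  by apply: le_trans h1; rewrite big1 // => k _; rewrite mul0r.
apply: le_trans h2 _.
rewrite -mulr_sumr -[X in _ <= X]mulr1 ler_wpM2l // -[X in _ <= X](sum_muk n0).
by apply: ler_sum => k _; have [_ /andP[_ ]] := mI_fin k n0 meas_01.
Qed.

End Outer.

End S.

Section G.
Context {R : realType}.
Local Notation LT := (ltac:(let t := type of (@leb R) in match t with set ?T -> _ => exact T end)) (only parsing).

Lemma pos_ge0 (x : R) : 0 <= pos x.
Proof. by rewrite /pos le_max lexx orbT. Qed.

Lemma pos_le_norm (x : R) : pos x <= `|x|.
Proof. by rewrite /pos ge_max normr_ge0 andbT ler_norm. Qed.

Lemma pos_lip (x y : R) : `|pos x - pos y| <= `|x - y|.
Proof.
have h1 := ler_norm (x - y).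
have h2 : y - x <= `|x - y| by rewrite distrC ler_norm.
rewrite /pos ler_norml.
have ex : Num.max x 0 = (if x <= 0 then 0 else x).
  by case: (leP x 0).
have ey : Num.max y 0 = (if y <= 0 then 0 else y).
  by case: (leP y 0).
rewrite ex ey; case: (leP x 0) => hx; case: (leP y 0) => hy; apply/andP; split; lra.
Qed.

Variables (n : nat) (w : R -> R -> R) (c : R).
Hypothesis n0 : (0 < n)%N.
Hypothesis c0 : 0 <= c.
Hypothesis wc : forall x y, x \in `[0, 1] -> y \in `[0, 1] -> `|w x y| <= c.
Hypothesis wm : An_star_measurable n w.

Definition aa k l := w (pt n k) (pt n l).

Lemma wa k l x y : (k < (2 * n).+1)%N -> (l < (2 * n).+1)%N ->
  atom n k x -> atom n l y -> w x y = aa k l.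
Proof.
move=> kN lN ax ay; have [a0 ha] := wm kN lN.
by rewrite /aa (ha _ _ ax ay) (ha _ _ (atom_pt k n0) (atom_pt l n0)).
Qed.

Lemma aa_bound k l : (k < (2 * n).+1)%N -> (l < (2 * n).+1)%N -> `|aa k l| <= c.
Proof.
move=> kN lN; apply: wc; rewrite in_itv /=.
- exact: atom_01 n0 kN (atom_pt k n0).
- exact: atom_01 n0 lN (atom_pt l n0).
Qed.


Let N := (2 * n).+1.

Lemma muk_le k : muk (R:=R) n k <= n%:R^-1.
Proof. by rewrite /muk; case: ifP => // _; rewrite invr_ge0 ler0n. Qed.

Lemma partial_sum (beta m lam : nat -> R) (P : pred nat) j :
  (j < N)%N -> ~~ P j ->
  (forall i, (i < N)%N -> `|beta i| <= 2 * c) ->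
  (forall i, (i < N)%N -> i != j -> m i = if P i then lam i else 0) ->
  0 <= m j <= muk n j ->
  `|\sum_(0 <= i < N) beta i * m i -
    \sum_(0 <= i < N) (if P i then beta i * lam i else 0)| <= 2 * c / n%:R.
Proof.
move=> jN Pj hb hm /andP[mj0 mj1].
rewrite -sumrB; apply: le_trans (ler_norm_sum _ _ _) _.
apply: (@le_trans _ _ (\sum_(0 <= i < N) (if i == j then 2 * c / n%:R else 0))).
  apply: ler_sum_nat => i /andP[_ iN].
  case: (eqVneq i j) => [->|ij].
  - rewrite (negbTE Pj) subr0 normrM (ger0_norm mj0).
    apply: ler_pM => //; first exact: hb.
    exact: le_trans mj1 (muk_le j).
  - by rewrite (hm i iN ij); case: (P i); rewrite ?mulr0 subrr normr0.
by rewrite -big_mkcond big_nat1_eq /= jN.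
Qed.

Lemma beta_bound k l i : (k < N)%N -> (l < N)%N -> (i < N)%N ->
  `|aa i l - aa i k| <= 2 * c.
Proof.
move=> kN lN iN; apply: le_trans (ler_normB _ _) _.
by rewrite mulr2n mulrDl mul1r; apply: lerD; apply: aa_bound.
Qed.

Lemma inner_formula (D : set R) p q k l : measurable (D : set LT) -> D `<=` `[0, 1] ->
  (k < N)%N -> (l < N)%N -> atom n l p -> atom n k q ->
  \int[leb]_(x in D) (w x p - w x q) =
  \sum_(0 <= i < N) (aa i l - aa i k) * mI n D i.
Proof.
move=> mD D01 kN lN ap aq; rewrite /Rintegral.
rewrite (@Rint_step _ n D (fun x => w x p - w x q) (fun i => aa i l - aa i k)) //.
by move=> i x iN ai _; rewrite (wa iN lN ai ap) (wa iN kN ai aq).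
Qed.

Lemma inner_norm (D : set R) k l : measurable (D : set LT) ->
  (k < N)%N -> (l < N)%N ->
  `|\sum_(0 <= i < N) (aa i l - aa i k) * mI n D i| <= 2 * c.
Proof.
move=> mD kN lN; apply: le_trans (ler_norm_sum _ _ _) _.
apply: (@le_trans _ _ (\sum_(0 <= i < N) 2 * c * muk n i)).
  apply: ler_sum_nat => i /andP[_ iN].
  have [_ /andP[m0 m1]] := mI_fin i n0 mD.
  rewrite normrM (ger0_norm m0); apply: ler_pM => //.
  exact: beta_bound.
by rewrite -mulr_sumr sum_muk // mulr1.
Qed.


Definition s1f (lam : nat -> R) k l :=
  pos (\sum_(0 <= i < N) (if (i < k)%N then (aa i l - aa i k) * lam i else 0)).
Definition s2f (lam : nat -> R) k l :=
  pos (\sum_(0 <= i < N) (if (l < i)%N then (aa i k - aa i l) * lam i else 0)).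
Definition FF (lam : nat -> R) := Fs n (s1f lam) + Fs n (s2f lam).

Variable A : set R.
Hypothesis mA : measurable (A : set LT).
Hypothesis A01 : A `<=` `[0, 1].

Lemma mIe (D : set R) i : atom n i `&` D = set0 -> mI n D i = 0.
Proof. by rewrite /mI => ->; rewrite lebE measure0. Qed.

Lemma meas_c0 y : measurable (A `&` `[0, y]%classic : set LT).
Proof. by apply: measurableI => //; apply: measL; exact: measurable_itv. Qed.

Lemma meas_c1 z : measurable (A `&` `[z, 1]%classic : set LT).
Proof. by apply: measurableI => //; apply: measL; exact: measurable_itv. Qed.

Lemma sub_c0 y : A `&` `[0, y]%classic `<=` `[0, 1]. Proof. by move=> x [/A01]. Qed.
Lemma sub_c1 z : A `&` `[z, 1]%classic `<=` `[0, 1]. Proof. by move=> x [/A01]. Qed.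

Lemma mI_c0 i k y : (k < N)%N -> atom n k y -> i != k ->
  mI n (A `&` `[0, y]%classic) i = if (i < k)%N then mI n A i else 0.
Proof.
move=> kN ay ik; case: (ltngtP i k) => h.
- rewrite /mI; congr (fine (leb _)); apply/seteqP; split.
    by move=> x [ax [Ax _]].
  move=> x [ax Ax]; split => //; split => //; rewrite /= in_itv /=.
  have iN : (i < N)%N by apply: ltn_trans h kN.
  have /andP[x0 _] := atom_01 n0 iN ax.
  by rewrite x0 /= ltW // (atom_lt n0 h ax ay).
- apply: mIe; apply/seteqP; split => // x [ax [Ax]]; rewrite /= in_itv /= => /andP[_ xy].
  by have := atom_lt n0 h ay ax; rewrite ltNge xy.
- by move: ik; rewrite h eqxx.
Qed.

Lemma mI_c1 i l z : (l < N)%N -> atom n l z -> i != l ->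
  mI n (A `&` `[z, 1]%classic) i = if (l < i)%N then mI n A i else 0.
Proof.
move=> lN az il; case: (ltngtP i l) => h.
- apply: mIe; apply/seteqP; split => // x [ax [Ax]]; rewrite /= in_itv /= => /andP[zx _].
  by have := atom_lt n0 h ax az; rewrite ltNge zx.
- rewrite /mI; congr (fine (leb _)); apply/seteqP; split.
    by move=> x [ax [Ax _]].
  move=> x [ax Ax]; split => //; split => //; rewrite /= in_itv /=.
  have := A01 Ax; rewrite /= in_itv /= => /andP[_ x1].
  by rewrite x1 andbT ltW // (atom_lt n0 h az ax).
- by move: il; rewrite h eqxx.
Qed.

Let e := 2 * c / n%:R.

Lemma e_ge0 : 0 <= e.
Proof. by rewrite /e mulr_ge0 // ?mulr_ge0 // invr_ge0 ler0n. Qed.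

Lemma pos0 : pos (0 : R) = 0.
Proof. by rewrite /pos; case: leP. Qed.

Lemma T1_bound :
  Fs n (s1f (mI n A)) - e <=
  \int[leb]_(z in `[0, 1]%classic)
     \int[leb]_(y in `[0, 1]%classic `&` [set y | y < z])
        pos (\int[leb]_(x in A `&` `[0, y]%classic) (w x z - w x y))
  <= Fs n (s1f (mI n A)) + e.
Proof.
have B0 : 0 <= 2 * c by rewrite mulr_ge0.
have h := (@outer_bound R n (fun y z => pos (\int[leb]_(x in A `&` `[0, y]%classic) (w x z - w x y)))
  (s1f (mI n A)) (2 * c) e n0 e_ge0 B0).
apply: h.
- move=> y z y01 z01 _; rewrite pos_ge0 /=.
  have [k kN ay] := atom_cover n0 y01; have [l lN az] := atom_cover n0 z01.
  rewrite (inner_formula (meas_c0 y) (@sub_c0 y) kN lN az ay).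
  apply: le_trans (pos_le_norm _) _; exact: inner_norm (meas_c0 y) kN lN.
- move=> k l y z kN lN ok ol kl ay az.
  rewrite (inner_formula (meas_c0 y) (@sub_c0 y) kN lN az ay) /s1f.
  apply: le_trans (pos_lip _ _) _.
  apply: (partial_sum kN); first by rewrite ltnn.
  + by move=> i iN; exact: beta_bound.
  + by move=> i iN ik; exact: mI_c0.
  + by have [_] := mI_fin k n0 (meas_c0 y).
- move=> l y z lN ol ay az.
  rewrite (inner_formula (meas_c0 y) (@sub_c0 y) lN lN az ay) big1 ?pos0 //.
  by move=> i _; rewrite subrr mul0r.
Qed.

Lemma T2_bound :
  Fs n (s2f (mI n A)) - e <=
  \int[leb]_(z in `[0, 1]%classic)
     \int[leb]_(y in `[0, 1]%classic `&` [set y | y < z])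
        pos (\int[leb]_(x in A `&` `[z, 1]%classic) (w x y - w x z))
  <= Fs n (s2f (mI n A)) + e.
Proof.
have B0 : 0 <= 2 * c by rewrite mulr_ge0.
have h := (@outer_bound R n (fun y z => pos (\int[leb]_(x in A `&` `[z, 1]%classic) (w x y - w x z)))
  (s2f (mI n A)) (2 * c) e n0 e_ge0 B0).
apply: h.
- move=> y z y01 z01 _; rewrite pos_ge0 /=.
  have [k kN ay] := atom_cover n0 y01; have [l lN az] := atom_cover n0 z01.
  rewrite (inner_formula (meas_c1 z) (@sub_c1 z) lN kN ay az).
  apply: le_trans (pos_le_norm _) _; exact: inner_norm (meas_c1 z) lN kN.
- move=> k l y z kN lN ok ol kl ay az.
  rewrite (inner_formula (meas_c1 z) (@sub_c1 z) lN kN ay az) /s2f.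
  apply: le_trans (pos_lip _ _) _.
  apply: (partial_sum lN); first by rewrite ltnn.
  + by move=> i iN; exact: beta_bound.
  + by move=> i iN il; exact: mI_c1.
  + by have [_] := mI_fin l n0 (meas_c1 z).
- move=> l y z lN ol ay az.
  rewrite (inner_formula (meas_c1 z) (@sub_c1 z) lN lN ay az) big1 ?pos0 //.
  by move=> i _; rewrite subrr mul0r.
Qed.


Lemma sum2 (a b x y f : R) : x - f <= a <= x + f -> y - f <= b <= y + f ->
  x + y - 2 * f <= a + b <= x + y + 2 * f.
Proof. move=> /andP[h1 h2] /andP[h3 h4]; apply/andP; split; lra. Qed.

Lemma sum2c (a b f : R) : a <= f -> b <= f -> a + b <= 2 * f.
Proof. move=> h1 h2; lra. Qed.

Lemma Gamma_approx : FF (mI n A) - 2 * e <= Gamma w A <= FF (mI n A) + 2 * e.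
Proof. exact: sum2 T1_bound T2_bound. Qed.

Lemma Gamma_crude : Gamma w A <= 4 * c.
Proof.
have B0 : 0 <= 2 * c by rewrite mulr_ge0.
have h1 := (@outer_crude R n (fun y z => pos (\int[leb]_(x in A `&` `[0, y]%classic) (w x z - w x y)))
  (2 * c) n0 B0).
have h2 := (@outer_crude R n (fun y z => pos (\int[leb]_(x in A `&` `[z, 1]%classic) (w x y - w x z)))
  (2 * c) n0 B0).
have /andP[_ u1] : 0 <= \int[leb]_(z in `[0, 1]%classic)
     \int[leb]_(y in `[0, 1]%classic `&` [set y | y < z])
        pos (\int[leb]_(x in A `&` `[0, y]%classic) (w x z - w x y)) <= 2 * c.
  apply: h1 => y z y01 z01 _; rewrite pos_ge0 /=.
  have [k kN ay] := atom_cover n0 y01; have [l lN az] := atom_cover n0 z01.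
  rewrite (inner_formula (meas_c0 y) (@sub_c0 y) kN lN az ay).
  apply: le_trans (pos_le_norm _) _; exact: inner_norm (meas_c0 y) kN lN.
have /andP[_ u2] : 0 <= \int[leb]_(z in `[0, 1]%classic)
     \int[leb]_(y in `[0, 1]%classic `&` [set y | y < z])
        pos (\int[leb]_(x in A `&` `[z, 1]%classic) (w x y - w x z)) <= 2 * c.
  apply: h2 => y z y01 z01 _; rewrite pos_ge0 /=.
  have [k kN ay] := atom_cover n0 y01; have [l lN az] := atom_cover n0 z01.
  rewrite (inner_formula (meas_c1 z) (@sub_c1 z) lN kN ay az).
  apply: le_trans (pos_le_norm _) _; exact: inner_norm (meas_c1 z) lN kN.
have -> : 4 * c = 2 * (2 * c) by rewrite mulrA; congr (_ * _); rewrite -natrM.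
exact: sum2c u1 u2.
Qed.

End G.

Section C.
Context {R : realType}.
Variables (n : nat) (w : R -> R -> R).
Variable (t : R).
Hypothesis t01 : 0 <= t <= 1.
Let N := (2 * n).+1.

Definition comb (u v : nat -> R) := fun i => (1 - t) * u i + t * v i.

Lemma sum_conv (F G H : nat -> R) :
  (forall i, (i < N)%N -> F i <= (1 - t) * G i + t * H i) ->
  \sum_(0 <= i < N) F i <= (1 - t) * \sum_(0 <= i < N) G i + t * \sum_(0 <= i < N) H i.
Proof.
move=> h; rewrite !mulr_sumr -big_split; apply: ler_sum_nat => i /andP[_ iN]; exact: h.
Qed.

Lemma mul_conv (m X Y Z : R) : 0 <= m -> X <= (1 - t) * Y + t * Z ->
  m * X <= (1 - t) * (m * Y) + t * (m * Z).
Proof.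
move=> m0 h; apply: le_trans (ler_wpM2l m0 h) _.
by rewrite mulrDr !mulrA ![m * _]mulrC.
Qed.

Lemma pos_conv (a b : R) : pos ((1 - t) * a + t * b) <= (1 - t) * pos a + t * pos b.
Proof.
have /andP[t0 t1] := t01.
have pa : a <= pos a by rewrite /pos le_max lexx.
have pb : b <= pos b by rewrite /pos le_max lexx.
have pa0 := pos_ge0 a; have pb0 := pos_ge0 b.
rewrite /pos ge_max; apply/andP; split.
- by apply: lerD; apply: ler_wpM2l => //; rewrite subr_ge0.
- by apply: addr_ge0; apply: mulr_ge0 => //; rewrite subr_ge0.
Qed.

Lemma lin_comb (beta : nat -> R) (P : pred nat) u v :
  \sum_(0 <= i < N) (if P i then beta i * comb u v i else 0) =
  (1 - t) * \sum_(0 <= i < N) (if P i then beta i * u i else 0) +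
  t * \sum_(0 <= i < N) (if P i then beta i * v i else 0).
Proof.
rewrite !mulr_sumr -big_split; apply: eq_bigr => i _; rewrite /comb.
case: (P i).
- rewrite -[RHS]/((1 - t) * (beta i * u i) + t * (beta i * v i)); ring.
- by rewrite -[RHS]/((1 - t) * 0 + t * 0) !mulr0 addr0.
Qed.

Lemma Fs_conv (s s' s'' : nat -> nat -> R) :
  (forall k l, s k l <= (1 - t) * s' k l + t * s'' k l) ->
  Fs n s <= (1 - t) * Fs n s' + t * Fs n s''.
Proof.
move=> h; rewrite /Fs; apply: sum_conv => l _; apply: mul_conv; first exact: muk_ge0.
rewrite /Hs; apply: sum_conv => k _; case: ifP => _; last by rewrite !mulr0 addr0.
by apply: mul_conv; [exact: muk_ge0 | exact: h].
Qed.

Lemma FF_conv u v : FF n w (comb u v) <= (1 - t) * FF n w u + t * FF n w v.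
Proof.
rewrite /FF.
have h : forall X Y Z X' Y' Z' : R, X <= (1 - t) * Y + t * Z ->
    X' <= (1 - t) * Y' + t * Z' -> X + X' <= (1 - t) * (Y + Y') + t * (Z + Z').
  by move=> X Y Z X' Y' Z' h1 h2; rewrite !mulrDr; apply: le_trans (lerD h1 h2) _; lra.
apply: h; apply: Fs_conv => k l.
- by rewrite /s1f lin_comb; exact: pos_conv.
- by rewrite /s2f lin_comb; exact: pos_conv.
Qed.

End C.

Section V.
Context {R : realType}.
Variables (n : nat) (w : R -> R -> R).
Hypothesis n0 : (0 < n)%N.
Let N := (2 * n).+1.

Definition vert (S : nat -> bool) i : R := if S i then muk n i else 0.
Definition mix (S : nat -> bool) (lam : nat -> R) j i :=
  if (i < j)%N then vert S i else lam i.

Lemma FF_ext (u v : nat -> R) : (forall i, (i < N)%N -> u i = v i) ->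
  FF n w u = FF n w v.
Proof.
move=> h; rewrite /FF.
have -> : s1f n w u = s1f n w v.
  apply/funext => k; apply/funext => l; rewrite /s1f; congr pos.
  by apply: eq_big_nat => i /andP[_ iN]; rewrite h.
have -> : s2f n w u = s2f n w v.
  apply/funext => k; apply/funext => l; rewrite /s2f; congr pos.
  by apply: eq_big_nat => i /andP[_ iN]; rewrite h.
by [].
Qed.

Lemma vertex j (lam : nat -> R) : (forall i, 0 <= lam i <= muk n i) ->
  exists S, FF n w lam <= FF n w (mix S lam j).
Proof.
move=> box; elim: j => [|j [S hS]].
  exists (fun=> false); have -> : mix (fun=> false) lam 0 = lam by apply/funext => i.
  exact: lexx.
set lam' := mix S lam j in hS.
set S0 := fun i => if i == j then false else S i.
set S1 := fun i => if i == j then true else S i.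
have eu : forall i, i != j -> mix S0 lam j.+1 i = lam' i.
  move=> i ij; rewrite /mix /lam' /vert /S0 (negbTE ij) ltnS leq_eqVlt (negbTE ij) //.
have ev : forall i, i != j -> mix S1 lam j.+1 i = lam' i.
  move=> i ij; rewrite /mix /lam' /vert /S1 (negbTE ij) ltnS leq_eqVlt (negbTE ij) //.
have uj : mix S0 lam j.+1 j = 0 by rewrite /mix /vert /S0 ltnSn eqxx.
have vj : mix S1 lam j.+1 j = muk n j by rewrite /mix /vert /S1 ltnSn eqxx.
have lj : lam' j = lam j by rewrite /lam' /mix ltnn.
have /andP[l0 l1] := box j.
case: (eqVneq (muk (R:=R) n j) 0) => [m0|m0].
  exists S0; suff -> : mix S0 lam j.+1 = lam' by [].
  apply/funext => i; case: (eqVneq i j) => [->|ij]; last by rewrite eu.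
  by rewrite uj lj; apply/eqP; rewrite eq_le l0 -m0 l1.
have mpos : 0 < muk (R:=R) n j by rewrite lt_neqAle eq_sym m0 muk_ge0.
set t := lam j / muk n j.
have t01 : 0 <= t <= 1.
  by rewrite /t divr_ge0 ?muk_ge0 //= ler_pdivrMr // mul1r.
have ec : lam' = comb t (mix S0 lam j.+1) (mix S1 lam j.+1).
  apply/funext => i; rewrite /comb; case: (eqVneq i j) => [->|ij].
  - by rewrite uj vj lj mulr0 add0r /t mulfVK // gt_eqF.
  - by rewrite eu // ev // -mulrDl subrK mul1r.
have hc := @FF_conv R n w t t01 (mix S0 lam j.+1) (mix S1 lam j.+1).
rewrite -ec in hc.
have /andP[t0 t1] := t01.
move: hc; set a := FF n w (mix S0 lam j.+1); set b := FF n w (mix S1 lam j.+1) => hc.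
case: (leP a b) => h.
- exists S1; apply: le_trans hS (le_trans hc _).
  rewrite -subr_ge0; have -> : b - ((1 - t) * a + t * b) = (1 - t) * (b - a) by ring.
  by apply: mulr_ge0; rewrite subr_ge0.
- exists S0; apply: le_trans hS (le_trans hc _).
  rewrite -subr_ge0; have -> : a - ((1 - t) * a + t * b) = t * (a - b) by ring.
  by apply: mulr_ge0 => //; rewrite subr_ge0 ltW.
Qed.

End V.

Section F.
Context {R : realType}.
Variable n : nat.
Hypothesis n0 : (0 < n)%N.
Let N := (2 * n).+1.

Definition Bset (S : nat -> bool) : set R :=
  \bigcup_(k in [set k | (k < N)%N /\ S k]) atom n k.

Lemma B_An S : An_star n (Bset S).
Proof. by exists (fun k => S k). Qed.

Lemma An_Lmeas (A : set R) : An_star n A -> Lmeas A.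
Proof.
case=> S ->; split.
- by apply: bigcup_measurable => k _; exact: atom_meas.
- move=> x [k [kN _] ak]; rewrite /= in_itv /=; exact: atom_01 n0 kN ak.
Qed.

Lemma mI_B S i : (i < N)%N -> mI n (Bset S) i = vert n S i.
Proof.
move=> iN; rewrite /vert; case Si: (S i).
- apply: mI_atom => //; first by apply: (An_Lmeas (B_An S)).1.
  by move=> x ax; exists i.
- rewrite /mI (_ : atom n i `&` Bset S = set0) ?lebE ?measure0 //.
  apply/seteqP; split => // x [ax [k [kN Sk] akx]].
  case: (eqVneq k i) => [ki|ki]; first by move: Sk; rewrite ki Si.
  exact: atom_disj n0 (elimN eqP ki) akx ax.
Qed.

End F.


End Helpers.
Import Helpers.
Unset Implicit Arguments.

Theorem mainTheorem6 (R : realType) :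
  exists C : R,
  forall (n : nat) (c : R) (w : R -> R -> R),
    (0 < n)%N -> 0 < c ->
    (forall x y, x \in `[0, 1] -> y \in `[0, 1] -> w x y = w y x) ->
    (forall x y, x \in `[0, 1] -> y \in `[0, 1] -> `|w x y| <= c) ->
    An_star_measurable n w ->
    `|Gamma_sup w - Gamma_max_n n w| <= C * c / n%:R.
Proof.
exists 8 => n c w n0 c0 _ wc wm.
have c0' : 0 <= c by exact: ltW.
set G := [set Gamma w A | A in Lmeas].
set Gm := [set Gamma w A | A in An_star n].
have key : forall A, Lmeas A -> exists S, Gamma w A <= Gamma w (Bset n S) + 8 * c / n%:R.
  move=> A [mA A01].
  have hbox : forall i, 0 <= mI n A i <= muk n i.
    by move=> i; have [_ h] := @mI_fin R n A i n0 mA.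
  have [S hS] := vertex w ((2 * n).+1) hbox.
  exists S.
  have eq : FF n w (mix n S (mI n A) (2 * n).+1) = FF n w (mI n (Bset n S)).
    by apply: FF_ext => i iN; rewrite (mI_B n0 S iN) /mix iN.
  have [mB B01] := An_Lmeas n0 (B_An (R:=R) n S).
  have /andP[_ hA] := Gamma_approx n0 c0' wc wm mA A01.
  have /andP[hB _] := Gamma_approx n0 c0' wc wm mB B01.
  rewrite eq in hS.
  move: hA hB hS; set e := 2 * c / n%:R.
  have -> : 8 * c / n%:R = 4 * e by rewrite /e !mulrA -natrM.
  set a := Gamma w A; set b := Gamma w (Bset n S).
  set f1 := FF n w (mI n A); set f2 := FF n w (mI n (Bset n S)).
  move=> h1 h2 h3; lra.
have ubG : forall A, Lmeas A -> Gamma w A <= 4 * c.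
  move=> A [mA A01]; have := Gamma_crude n0 c0' wc wm mA A01. move=> hh; exact hh.
have Gm0 : Gm !=set0 by exists (Gamma w (Bset n (fun=> false))); exists (Bset n (fun=> false)) => //; exact: B_An.
have G0 : G !=set0.
  by exists (Gamma w (Bset n (fun=> false))); exists (Bset n (fun=> false)) => //; exact (An_Lmeas n0 (B_An (R:=R) n _)).
have hubG : has_ubound G by exists (4 * c) => _ [A hA <-]; exact: ubG.
have hubGm : has_ubound Gm.
  by exists (4 * c) => _ [A hA <-]; exact (ubG _ (An_Lmeas n0 hA)).
have le1 : Gamma_max_n n w <= Gamma_sup w.
  apply: sup_le => //.
  move=> _ [A hA <-]; exists (Gamma w A); split => //; exists A => //; exact (An_Lmeas n0 hA).
have le2 : Gamma_sup w <= Gamma_max_n n w + 8 * c / n%:R.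
  apply: ge_sup => // _ [A hA <-].
  have [S hS] := key A hA; apply: le_trans hS _; rewrite lerD2r.
  by apply: ub_le_sup => //; exists (Bset n S) => //; exact: B_An.
rewrite ger0_norm ?subr_ge0 //; lra.
Qed.
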